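(* Let $n\ge 1$, $s_1,\dots,s_n\in[0,1)$ and $v_1,\dots,v_n\in\mathbb{R}$, and let $k:=|\{v_1,\dots,v_n\}|$ be the number of distinct values among the $v_i$. Then there exists $t\in\mathbb{R}$ such that $$B(s_1+v_1t,\dots,s_n+v_nt)\ \ge\ \sqrt{k/12}.$$
   Context: For $r\in\mathbb{R}$, $\{r\}:=r-\lfloor r\rfloor$ is the fractional part. For $r_1,\dots,r_n\in\mathbb{R}$ and $0\le a\le b\le 1$ let $N_{a,b}(r_1,\dots,r_n):=|\{i:\{r_i\}\in[a,b]\}|$. The bias is $$B(r_1,\dots,r_n):=\sup_{0\le a\le b\le 1}\big|N_{a,b}(r_1,\dots,r_n)-n(b-a)\big|.$$ (Equivalently, it is $n$ times the usual discrepancy of $\{r_1\},\dots,\{r_n\}$.) *)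

(* Defs.v *)
From Stdlib Require Import Reals Lra Lia List.
Import ListNotations.
Open Scope R_scope.

(* floor r = up r - 1, since  r < IZR (up r) <= r + 1 *)
Definition floorR (r : R) : Z := (up r - 1)%Z.
Definition frac (r : R) : R := r - IZR (floorR r).

(* Finite sequences r_1..r_n are represented as functions r : nat -> R,
   using the indices 0..n-1. *)
Definition in_interval (a b x : R) : bool :=
  if Rle_dec a x then (if Rle_dec x b then true else false) else false.

Definition Ncount (n : nat) (r : nat -> R) (a b : R) : nat :=
  length (filter (fun i => in_interval a b (frac (r i))) (seq 0 n)).

Definition bias_set (n : nat) (r : nat -> R) (x : R) : Prop :=
  exists a b, 0 <= a /\ a <= b /\ b <= 1 /\
    x = Rabs (INR (Ncount n r a b) - INR n * (b - a)).

Lemma bias_set_bounded (n : nat) (r : nat -> R) :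
  bound (bias_set n r).
Proof.
  exists (INR n + INR n). intros x [a [b [Ha [Hab [Hb Hx]]]]]. subst x.
  assert (H0 : (Ncount n r a b <= n)%nat).
  { unfold Ncount. rewrite <- (length_seq n 0) at 2. apply filter_length_le. }
  apply le_INR in H0.
  assert (0 <= INR n) by apply pos_INR.
  assert (0 <= INR (Ncount n r a b)) by apply pos_INR.
  apply Rabs_le. split; nra.
Qed.

Lemma bias_set_nonempty (n : nat) (r : nat -> R) :
  exists x, bias_set n r x.
Proof.
  eexists. exists 0, 0. repeat split; lra.
Qed.

Definition bias (n : nat) (r : nat -> R) : R :=
  proj1_sig (completeness (bias_set n r) (bias_set_bounded n r)
                          (bias_set_nonempty n r)).

Definition num_distinct (n : nat) (v : nat -> R) : nat :=
  length (nodup Req_EM_T (map v (seq 0 n))).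

(* Main.v *)
Require Import Defs.
From Stdlib Require Import Reals List.
Open Scope R_scope.
From Stdlib Require Import Lra Lia ZArith Classical.
From Coquelicot Require Import Coquelicot.
Open Scope R_scope.

Ltac rfix := match goal with |- @eq _ ?a ?b => change (@eq R a b) end.

Lemma floorR_spec x : IZR (floorR x) <= x < IZR (floorR x) + 1.
Proof.
  unfold floorR. destruct (archimed x) as [H1 H2].
  rewrite minus_IZR. simpl. lra.
Qed.

Lemma frac_bounds x : 0 <= frac x < 1.
Proof. unfold frac. pose proof (floorR_spec x). lra. Qed.

Lemma frac_unique x z : 0 <= x - IZR z < 1 -> frac x = x - IZR z.
Proof.
  intros H. pose proof (floorR_spec x).
  assert (floorR x = z).
  { assert (IZR z < IZR (floorR x) + 1) by lra.
    assert (IZR (floorR x) < IZR z + 1) by lra.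
    rewrite <- plus_IZR in *. apply lt_IZR in H1. apply lt_IZR in H2. lia. }
  unfold frac. rewrite H1. reflexivity.
Qed.

Lemma frac_shift x z : frac (x + IZR z) = frac x.
Proof.
  rewrite (frac_unique (x + IZR z) (floorR x + z)).
  - unfold frac. rewrite plus_IZR. ring.
  - rewrite plus_IZR. pose proof (floorR_spec x). lra.
Qed.

Lemma frac_eq x : exists z, frac x = x - IZR z.
Proof. exists (floorR x). reflexivity. Qed.

Lemma frac_diff y x : 0 <= y < 1 -> 0 <= x < 1 ->
  frac (y - x) = if Rle_dec x y then y - x else y - x + 1.
Proof.
  intros Hy Hx. destruct (Rle_dec x y).
  - rewrite (frac_unique _ 0); simpl; lra.
  - rewrite (frac_unique _ (-1)); simpl; lra.
Qed.

Lemma frac_frac_sub y r : frac (y - r) = frac (y - frac r).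
Proof.
  unfold frac at 3. replace (y - (r - IZR (floorR r))) with ((y - r) + IZR (floorR r)) by ring.
  rewrite frac_shift. reflexivity.
Qed.

Lemma frac_frac y : frac (frac y) = frac y.
Proof. unfold frac at 2. replace (y - IZR (floorR y)) with (y + IZR (- floorR y)) by (rewrite opp_IZR; ring).
  rewrite frac_shift. reflexivity. Qed.

Fixpoint sumR (n : nat) (f : nat -> R) : R :=
  match n with O => 0 | S m => sumR m f + f m end.

Lemma sumR_ext n f g : (forall i, (i < n)%nat -> f i = g i) -> sumR n f = sumR n g.
Proof. induction n; simpl; intros H; auto. rewrite IHn by (intros; apply H; lia). rewrite H by lia. auto. Qed.

Lemma sumR_plus n f g : sumR n (fun i => f i + g i) = sumR n f + sumR n g.
Proof. induction n; simpl; [ring|rewrite IHn; ring]. Qed.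

Lemma sumR_mult_l n c f : c * sumR n f = sumR n (fun i => c * f i).
Proof. induction n; simpl; [ring|rewrite <- IHn; ring]. Qed.

Lemma sumR_mult_r n c f : sumR n f * c = sumR n (fun i => f i * c).
Proof. induction n; simpl; [ring|rewrite <- IHn; ring]. Qed.

Lemma sumR_const n c : sumR n (fun _ => c) = INR n * c.
Proof. induction n; simpl sumR; [simpl; ring|rewrite IHn, S_INR; ring]. Qed.

Lemma sumR_le n f g : (forall i, (i < n)%nat -> f i <= g i) -> sumR n f <= sumR n g.
Proof. induction n; simpl; intros H; [lra|]. pose proof (H n ltac:(lia)). pose proof (IHn ltac:(intros; apply H; lia)). lra. Qed.

Lemma sumR_sq n f : (sumR n f) * (sumR n f) = sumR n (fun i => sumR n (fun l => f i * f l)).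
Proof. rewrite sumR_mult_r. apply sumR_ext. intros. apply sumR_mult_l. Qed.

Lemma count_sumR n (p : nat -> bool) :
  INR (length (filter p (seq 0 n))) = sumR n (fun i => if p i then 1 else 0).
Proof.
  induction n; [reflexivity|].
  rewrite seq_S, filter_app, length_app. simpl sumR. rewrite plus_INR, IHn.
  simpl. destruct (p n); simpl; lra.
Qed.

Definition psi (x : R) := frac x - 1/2.
Definition hh (n : nat) (r : nat -> R) (y : R) := sumR n (fun i => psi (y - r i)).

Lemma bias_ub n r x : bias_set n r x -> x <= bias n r.
Proof. revert x.
  unfold bias. intros H. apply (proj1 (proj2_sig (completeness (bias_set n r) (bias_set_bounded n r) (bias_set_nonempty n r)))). 
Qed.

Lemma bias_nonneg n r : 0 <= bias n r.
Proof.
  eapply Rle_trans; [|apply bias_ub; exists 0, 0; repeat split; try lra; reflexivity].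
  apply Rabs_pos.
Qed.

Lemma in_interval_true a b x : in_interval a b x = true <-> a <= x <= b.
Proof.
  unfold in_interval. destruct (Rle_dec a x); destruct (Rle_dec x b); split; intros; try lra; try discriminate; auto.
Qed.

Lemma h_diff n r y y' d :
  0 <= y' -> y' < y -> y < 1 -> 0 < d -> d <= y - y' ->
  (forall i, (i < n)%nat -> frac (r i) <= y' \/ y' + d <= frac (r i)) ->
  hh n r y - hh n r y' = INR n * (y - y') - INR (Ncount n r (y' + d) y).
Proof.
  intros H0 H1 H2 Hd Hd2 Hi. unfold hh, Ncount. rewrite count_sumR.
  rewrite <- sumR_const. rewrite <- (Rplus_0_r (sumR n _ - _)).
  replace (sumR n (fun i : nat => psi (y - r i)) - sumR n (fun i : nat => psi (y' - r i)) + 0)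
    with (sumR n (fun i : nat => psi (y - r i)) + (-1) * sumR n (fun i : nat => psi (y' - r i))) by ring.
  replace (sumR n (fun _ : nat => y - y') - sumR n (fun i => if in_interval (y' + d) y (frac (r i)) then 1 else 0))
    with (sumR n (fun _ : nat => y - y') + (-1) * sumR n (fun i => if in_interval (y' + d) y (frac (r i)) then 1 else 0)) by ring.
  rewrite !sumR_mult_l, <- !sumR_plus. apply sumR_ext. intros i Hin.
  specialize (Hi i Hin). unfold psi. rewrite (frac_frac_sub y), (frac_frac_sub y').
  pose proof (frac_bounds (r i)). set (x := frac (r i)) in *.
  rewrite !frac_diff by lra.
  destruct (in_interval (y' + d) y x) eqn:E.
  - apply in_interval_true in E.
    destruct (Rle_dec x y); destruct (Rle_dec x y'); lra.
  - assert (~ (y' + d <= x <= y)) by (rewrite <- in_interval_true; congruence).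
    destruct (Rle_dec x y); destruct (Rle_dec x y'); lra.
Qed.

Fixpoint minR (n : nat) (f : nat -> R) : R :=
  match n with O => 1 | S m => Rmin (minR m f) (f m) end.

Lemma minR_pos n f : (forall i, (i < n)%nat -> 0 < f i) -> 0 < minR n f.
Proof. induction n; simpl; intros H; [lra|]. apply Rmin_glb_lt; [apply IHn; intros; apply H; lia|apply H; lia]. Qed.

Lemma minR_le n f i : (i < n)%nat -> minR n f <= f i.
Proof. induction n; simpl; intros H; [lia|]. destruct (Nat.eq_dec i n).
  - subst. apply Rmin_r.
  - eapply Rle_trans; [apply Rmin_l|]. apply IHn. lia. Qed.

Lemma hh_frac n r y : hh n r y = hh n r (frac y).
Proof.
  unfold hh. apply sumR_ext. intros. unfold psi.
  destruct (frac_eq y) as [z Hz]. rewrite Hz.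
  replace (y - IZR z - r i) with ((y - r i) + IZR (- z)) by (rewrite opp_IZR; ring).
  rewrite frac_shift. reflexivity.
Qed.

Lemma h_bias_ordered n r y y' : 0 <= y' -> y' < y -> y < 1 ->
  Rabs (hh n r y - hh n r y') <= bias n r.
Proof.
  intros H0 H1 H2.
  set (d0 := Rmin (y - y') (minR n (fun i => if Rlt_dec y' (frac (r i)) then frac (r i) - y' else 1))).
  assert (Hd0 : 0 < d0).
  { apply Rmin_glb_lt; [lra|]. apply minR_pos. intros. destruct (Rlt_dec _ _); lra. }
  assert (Hd : forall d, 0 < d -> d <= d0 ->
     Rabs (INR n * d - (hh n r y - hh n r y')) <= bias n r).
  { intros d Hd Hdd. rewrite (h_diff n r y y' d); try lra.
    - apply bias_ub. exists (y' + d), y. repeat split; try lra.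
      + unfold d0 in Hdd. pose proof (Rmin_l (y - y') (minR n (fun i => if Rlt_dec y' (frac (r i)) then frac (r i) - y' else 1))). lra.
      + f_equal. ring.
    - unfold d0 in Hdd. pose proof (Rmin_l (y - y') (minR n (fun i => if Rlt_dec y' (frac (r i)) then frac (r i) - y' else 1))). lra.
    - intros i Hi. pose proof (minR_le n (fun i => if Rlt_dec y' (frac (r i)) then frac (r i) - y' else 1) i Hi) as Ha.
      pose proof (Rmin_r (y - y') (minR n (fun i => if Rlt_dec y' (frac (r i)) then frac (r i) - y' else 1))) as Hb.
      fold d0 in Hb. simpl in Ha. destruct (Rlt_dec y' (frac (r i))); lra. }
  set (D := hh n r y - hh n r y') in *.
  destruct (Rle_dec (Rabs D) (bias n r)) as [|Hn]; auto. exfalso.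
  pose proof (pos_INR n) as Hn0.
  set (d := Rmin d0 ((Rabs D - bias n r) / (2 * (INR n + 1)))).
  assert (Hdp : 0 < d). { apply Rmin_glb_lt; auto. apply Rdiv_lt_0_compat; lra. }
  assert (Hdd : d <= d0) by apply Rmin_l.
  assert (Hd2 : d <= (Rabs D - bias n r) / (2 * (INR n + 1))) by apply Rmin_r.
  specialize (Hd d Hdp Hdd).
  assert (Hnd : INR n * d <= (Rabs D - bias n r) / 2).
  { apply Rle_trans with ((INR n + 1) * d); [nra|].
    assert (Hq : (INR n + 1) * ((Rabs D - bias n r) / (2 * (INR n + 1))) = (Rabs D - bias n r) / 2) by (field; lra).
    rewrite <- Hq. apply Rmult_le_compat_l; lra. }
  pose proof (Rabs_triang_inv D (INR n * d)) as Ht. rewrite Rabs_minus_sym in Hd.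
  rewrite (Rabs_right (INR n * d)) in Ht by nra. lra.
Qed.
Lemma h_bias n r y y' : Rabs (hh n r y - hh n r y') <= bias n r.
Proof.
  rewrite (hh_frac n r y), (hh_frac n r y').
  pose proof (frac_bounds y). pose proof (frac_bounds y').
  destruct (Rtotal_order (frac y) (frac y')) as [Hl|[Hl|Hl]].
  - rewrite Rabs_minus_sym. apply h_bias_ordered; lra.
  - rewrite Hl, Rminus_diag, Rabs_R0. apply bias_nonneg.
  - apply h_bias_ordered; lra.
Qed.


Definition B2 (x : R) := x * x - x + 1/6.
Definition K (d : R) := B2 (frac d) / 2.

Definition G2 p q y := y*y*y/3 - (p+q)*y*y/2 + p*q*y.

Lemma is_RInt_poly2 p q u w :
  is_RInt (fun y => (y - p) * (y - q)) u w (G2 p q w - G2 p q u).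
Proof.
  apply (is_RInt_derive (G2 p q)).
  - intros x _. unfold G2. auto_derive; [auto|field].
  - intros x _. apply (ex_derive_continuous (fun y => (y - p) * (y - q))). auto_derive; auto.
Qed.

Lemma pair_ordered al be : 0 <= al -> al <= be -> be < 1 ->
  is_RInt (fun y => psi (y - al) * psi (y - be)) 0 1 (B2 (be - al) / 2).
Proof.
  intros H0 H1 H2.
  assert (P1 : is_RInt (fun y => psi (y - al) * psi (y - be)) 0 al
       (G2 (al - 1/2) (be - 1/2) al - G2 (al - 1/2) (be - 1/2) 0)).
  { eapply is_RInt_ext; [|apply is_RInt_poly2].
    intros x Hx. rewrite Rmin_left, Rmax_right in Hx by lra.
    unfold psi. rewrite !frac_diff by lra.
    destruct (Rle_dec al x); [lra|]. destruct (Rle_dec be x); [lra|]. rfix; field. }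
  assert (P2 : is_RInt (fun y => psi (y - al) * psi (y - be)) al be
       (G2 (al + 1/2) (be - 1/2) be - G2 (al + 1/2) (be - 1/2) al)).
  { eapply is_RInt_ext; [|apply is_RInt_poly2].
    intros x Hx. rewrite Rmin_left, Rmax_right in Hx by lra.
    unfold psi. rewrite !frac_diff by lra.
    destruct (Rle_dec al x); [|lra]. destruct (Rle_dec be x); [lra|]. rfix; field. }
  assert (P3 : is_RInt (fun y => psi (y - al) * psi (y - be)) be 1
       (G2 (al + 1/2) (be + 1/2) 1 - G2 (al + 1/2) (be + 1/2) be)).
  { eapply is_RInt_ext; [|apply is_RInt_poly2].
    intros x Hx. rewrite Rmin_left, Rmax_right in Hx by lra.
    unfold psi. rewrite !frac_diff by lra.
    destruct (Rle_dec al x); [|lra]. destruct (Rle_dec be x); [|lra]. rfix; field. }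
  pose proof (is_RInt_Chasles _ _ _ _ _ _ (is_RInt_Chasles _ _ _ _ _ _ P1 P2) P3) as P.
  match type of P with is_RInt _ _ _ ?v => replace (B2 (be - al) / 2) with v; auto end.
  unfold plus; simpl. unfold G2, B2. field.
Qed.

Lemma frac_sub_frac a b : frac (a - b) = frac (frac a - frac b).
Proof.
  unfold frac at 3 4.
  replace (a - IZR (floorR a) - (b - IZR (floorR b))) with ((a - b) + IZR (floorR b - floorR a))
    by (rewrite minus_IZR; ring).
  rewrite frac_shift. reflexivity.
Qed.

Lemma pair_integral a b :
  is_RInt (fun y => psi (y - a) * psi (y - b)) 0 1 (K (a - b)).
Proof.
  pose proof (frac_bounds a) as Ha. pose proof (frac_bounds b) as Hb.
  assert (E : forall y, psi (y - a) * psi (y - b) = psi (y - frac a) * psi (y - frac b)).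
  { intros. unfold psi. rewrite (frac_frac_sub y a), (frac_frac_sub y b). reflexivity. }
  unfold K. rewrite frac_sub_frac.
  destruct (Rle_dec (frac a) (frac b)).
  - eapply is_RInt_ext; [intros; symmetry; apply E|].
    destruct (Req_dec (frac a) (frac b)) as [Heq|Hne].
    + rewrite Heq. replace (frac (frac b - frac b)) with (frac b - frac b)
        by (rewrite Rminus_diag, (frac_unique 0 0) by (simpl; lra); simpl; ring).
      apply pair_ordered; lra.
    + assert (frac a < frac b) by (destruct r; [auto|contradiction]).
      rewrite (frac_unique (frac a - frac b) (-1)) by (simpl; lra).
      replace (B2 (frac a - frac b - IZR (-1))) with (B2 (frac b - frac a)) by (unfold B2; simpl; ring).
      apply pair_ordered; lra.
  - apply (is_RInt_ext (fun y => psi (y - frac b) * psi (y - frac a))).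
    { intros y _. rewrite E. rfix. ring. }
    rewrite (frac_unique (frac a - frac b) 0) by (simpl; lra).
    replace (frac a - frac b - IZR 0) with (frac a - frac b) by (simpl; ring).
    apply pair_ordered; lra.
Qed.

Lemma is_RInt_lin p u w :
  is_RInt (fun y => y - p) u w ((w*w/2 - p*w) - (u*u/2 - p*u)).
Proof.
  apply (is_RInt_derive (fun y => y*y/2 - p*y)).
  - intros x _. auto_derive; [auto|field].
  - intros x _. apply (ex_derive_continuous (fun y => y - p)). auto_derive; auto.
Qed.

Lemma psi_integral a : is_RInt (fun y => psi (y - a)) 0 1 0.
Proof.
  pose proof (frac_bounds a) as Ha.
  assert (P1 : is_RInt (fun y => psi (y - a)) 0 (frac a)
    (((frac a)*(frac a)/2 - (frac a - 1/2)*(frac a)) - (0*0/2 - (frac a - 1/2)*0))).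
  { eapply is_RInt_ext; [|apply is_RInt_lin]. intros x Hx. rewrite Rmin_left, Rmax_right in Hx by lra.
    unfold psi. rewrite frac_frac_sub, frac_diff by lra. destruct (Rle_dec (frac a) x); [lra|]. rfix; field. }
  assert (P2 : is_RInt (fun y => psi (y - a)) (frac a) 1
    ((1*1/2 - (frac a + 1/2)*1) - ((frac a)*(frac a)/2 - (frac a + 1/2)*(frac a)))).
  { eapply is_RInt_ext; [|apply is_RInt_lin]. intros x Hx. rewrite Rmin_left, Rmax_right in Hx by lra.
    unfold psi. rewrite frac_frac_sub, frac_diff by lra. destruct (Rle_dec (frac a) x); [|lra]. rfix; field. }
  pose proof (is_RInt_Chasles _ _ _ _ _ _ P1 P2) as P.
  match type of P with is_RInt _ _ _ ?v => replace 0 with v at 2; auto end.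
  unfold plus; simpl. field.
Qed.

Lemma is_RInt_sumR n (f : nat -> R -> R) (I : nat -> R) u w :
  (forall i, (i < n)%nat -> is_RInt (f i) u w (I i)) ->
  is_RInt (fun y => sumR n (fun i => f i y)) u w (sumR n I).
Proof.
  induction n; intros H.
  - simpl. pose proof (is_RInt_const (V:=R_NormedModule) u w 0) as P.
    match type of P with is_RInt _ _ _ ?v => assert (Hv : v = 0) by (unfold scal; simpl; unfold mult; simpl; rfix; ring); rewrite Hv in P end. exact P.
  - simpl. apply (is_RInt_plus (fun y => sumR n (fun i => f i y)) (f n)).
    + apply IHn. intros; apply H; lia.
    + apply H; lia.
Qed.

Lemma h_integral n r c :
  is_RInt (fun y => (hh n r y - c) * (hh n r y - c)) 0 1
    (sumR n (fun i => sumR n (fun l => K (r i - r l))) + c * c).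
Proof.
  assert (E : forall y, (hh n r y - c) * (hh n r y - c) =
     (sumR n (fun i => sumR n (fun l => psi (y - r i) * psi (y - r l))) +
      sumR n (fun i => (-2 * c) * psi (y - r i))) + c * c).
  { intros y. unfold hh. rewrite <- sumR_sq, <- sumR_mult_l. ring. }
  eapply is_RInt_ext; [intros; symmetry; apply E|].
  replace (sumR n (fun i => sumR n (fun l => K (r i - r l))) + c * c) with
    (plus (plus (sumR n (fun i => sumR n (fun l => K (r i - r l)))) (sumR n (fun i => (-2*c) * 0))) (scal (1 - 0) (c * c))).
  2:{ unfold plus, scal; simpl. unfold mult; simpl. rewrite <- sumR_mult_l. rewrite sumR_const. rfix. ring. }
  apply (is_RInt_plus (V:=R_NormedModule) _ (fun _ => c * c)); [|apply (is_RInt_const (V:=R_NormedModule))].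
  apply (is_RInt_plus (V:=R_NormedModule) (fun y => sumR n (fun i => sumR n (fun l => psi (y - r i) * psi (y - r l))))
                      (fun y => sumR n (fun i => (-2 * c) * psi (y - r i)))).
  - apply is_RInt_sumR. intros i _. apply (is_RInt_sumR n (fun l y => psi (y - r i) * psi (y - r l))).
    intros l _. apply pair_integral.
  - apply (is_RInt_sumR n (fun i y => (-2 * c) * psi (y - r i))). intros i _.
    apply (is_RInt_scal (fun y => psi (y - r i)) 0 1 (-2 * c) 0). 
    apply psi_integral.
Qed.

Definition B3 (x : R) := x * (x - 1/2) * (x - 1).
Definition AA (d : R) := B3 (frac d) / 6.

Lemma Rabs_le_inv2 x a : Rabs x <= a -> -a <= x <= a.
Proof. intros H. pose proof (Rle_abs x). pose proof (Rle_abs (-x)). rewrite Rabs_Ropp in *. lra. Qed.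

Lemma aux5 Q m W : 0 <= Q -> -2 <= m <= 2 -> 0 <= W <= Q ->
  -(5 * Q) <= Q * m - 3 * W <= 5 * Q /\ -(5 * Q) <= Q * m + 3 * W <= 5 * Q.
Proof. intros. assert (-2 * Q <= Q * m <= 2 * Q) by (split; nra). lra. Qed.

Lemma B3_key u v z : 0 <= u < 1 -> 0 <= v < 1 ->
  Rabs (v - u + IZR z) < 1/2 ->
  Rabs (B3 v - B3 u - 3 * B2 u * (v - u + IZR z)) <= 5 * (v - u + IZR z) * (v - u + IZR z).
Proof.
  intros Hu Hv Hh.
  assert (Hz : (-2 < z < 2)%Z).
  { apply Rabs_def2 in Hh. split; apply lt_IZR; simpl; lra. }
  assert (Hc : z = 0%Z \/ z = 1%Z \/ z = (-1)%Z) by lia.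
  destruct Hc as [Hc|[Hc|Hc]]; subst z; simpl IZR in *;
  apply Rabs_def2 in Hh; apply Rabs_le; unfold B3, B2.
  - replace (v - u + 0) with (v - u) by ring.
    replace (v * (v - 1 / 2) * (v - 1) - u * (u - 1 / 2) * (u - 1) -
      3 * (u * u - u + 1 / 6) * (v - u)) with ((v - u) * (v - u) * (3 * u - 3/2 + (v - u))) by field.
    pose proof (Rle_0_sqr (v - u)) as Sq; unfold Rsqr in Sq.
    destruct (aux5 ((v - u) * (v - u)) (3 * u - 3/2 + (v - u)) 0) as [A1 A2]; try lra.
  - replace (v * (v - 1 / 2) * (v - 1) - u * (u - 1 / 2) * (u - 1) -
      3 * (u * u - u + 1 / 6) * (v - u + 1)) with
      ((v - u + 1) * (v - u + 1) * (3 * u - 3/2 + (v - u + 1)) - 3 * v * v) by field.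
    assert (0 <= v * v <= (v - u + 1) * (v - u + 1)) by nra.
    pose proof (Rle_0_sqr (v - u + 1)) as Sq; unfold Rsqr in Sq.
    destruct (aux5 ((v - u + 1) * (v - u + 1)) (3 * u - 3/2 + (v - u + 1)) (v * v)) as [A1 A2]; try lra.
  - replace (v * (v - 1 / 2) * (v - 1) - u * (u - 1 / 2) * (u - 1) -
      3 * (u * u - u + 1 / 6) * (v - u + -1)) with
      ((v - u + -1) * (v - u + -1) * (3 * u - 3/2 + (v - u + -1)) + 3 * (v - 1) * (v - 1)) by field.
    assert (0 <= (v - 1) * (v - 1) <= (v - u + -1) * (v - u + -1)) by nra.
    pose proof (Rle_0_sqr (v - u + -1)) as Sq; unfold Rsqr in Sq.
    destruct (aux5 ((v - u + -1) * (v - u + -1)) (3 * u - 3/2 + (v - u + -1)) ((v - 1) * (v - 1))) as [A1 A2]; try lra.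
Qed.

Lemma AA_deriv x : derivable_pt_lim AA x (K x).
Proof.
  intros eps Heps.
  assert (Hd : 0 < Rmin (1/2) eps) by (apply Rmin_glb_lt; lra).
  exists (mkposreal _ Hd). intros h Hh0 Hh. simpl in Hh.
  pose proof (Rmin_l (1/2) eps). pose proof (Rmin_r (1/2) eps).
  unfold AA, K.
  destruct (frac_eq x) as [z0 Hz0]. destruct (frac_eq (x + h)) as [z1 Hz1].
  pose proof (frac_bounds x). pose proof (frac_bounds (x + h)).
  assert (Eh : h = frac (x + h) - frac x + IZR (z1 - z0)) by (rewrite minus_IZR; lra).
  pose proof (B3_key (frac x) (frac (x + h)) (z1 - z0) ltac:(auto) ltac:(auto) ltac:(rewrite <- Eh; lra)) as HK.
  rewrite <- Eh in HK.
  replace ((B3 (frac (x + h)) / 6 - B3 (frac x) / 6) / h - B2 (frac x) / 2)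
    with ((B3 (frac (x + h)) - B3 (frac x) - 3 * B2 (frac x) * h) / (6 * h)) by (field; auto).
  unfold Rdiv. rewrite Rabs_mult, Rabs_inv, Rabs_mult.
  rewrite (Rabs_right 6) by lra.
  assert (0 < Rabs h) by (apply Rabs_pos_lt; auto).
  apply Rle_lt_trans with (5 * h * h * / (6 * Rabs h)).
  - apply Rmult_le_compat_r; [apply Rlt_le, Rinv_0_lt_compat; lra|auto].
  - replace (5 * h * h) with (5 * (Rabs h * Rabs h))
      by (rewrite <- Rabs_mult, Rabs_right; [ring|apply Rle_ge, Rle_0_sqr]).
    replace (5 * (Rabs h * Rabs h) * / (6 * Rabs h)) with (5/6 * Rabs h) by (field; lra). lra.
Qed.

Lemma g_deriv c w t : w <> 0 ->
  derivable_pt_lim (fun t => AA (c + w * t) / w) t (K (c + w * t)).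
Proof.
  intros Hw.
  assert (H1 : derivable_pt_lim (fun t => c + w * t) t w).
  { apply is_derive_Reals. auto_derive; auto. ring. }
  pose proof (derivable_pt_lim_comp _ AA t _ _ H1 (AA_deriv (c + w * t))) as H2.
  pose proof (derivable_pt_lim_scal _ (/ w) t _ H2) as H3.
  replace (K (c + w * t)) with (/ w * (K (c + w * t) * w)) by (field; auto).
  intros eps Heps. destruct (H3 eps Heps) as [d Hd]. exists d. intros h Hh0 Hh.
  specialize (Hd h Hh0 Hh). unfold mult_real_fct, comp in Hd.
  replace ((AA (c + w * (t + h)) / w - AA (c + w * t) / w) / h) with
    ((/ w * AA (c + w * (t + h)) - / w * AA (c + w * t)) / h) by (field; auto). exact Hd.
Qed.

Lemma deriv_sumR n (f df : nat -> R -> R) t :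
  (forall i, (i < n)%nat -> derivable_pt_lim (f i) t (df i t)) ->
  derivable_pt_lim (fun t => sumR n (fun i => f i t)) t (sumR n (fun i => df i t)).
Proof.
  induction n; intros H; simpl.
  - apply derivable_pt_lim_const.
  - apply (derivable_pt_lim_plus (fun t => sumR n (fun i => f i t)) (f n)).
    + apply IHn; intros; apply H; lia.
    + apply H; lia.
Qed.

Lemma sumR_abs_le n f g : (forall i, (i < n)%nat -> Rabs (f i) <= g i) -> Rabs (sumR n f) <= sumR n g.
Proof.
  induction n; intros H; simpl.
  - rewrite Rabs_R0; lra.
  - eapply Rle_trans; [apply Rabs_triang|]. pose proof (H n ltac:(lia)).
    pose proof (IHn ltac:(intros; apply H; lia)). lra.
Qed.

Lemma AA_bound d : Rabs (AA d) <= 1.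
Proof.
  unfold AA, B3. pose proof (frac_bounds d). set (x := frac d) in *.
  assert (0 <= x * (1 - x) <= 1) by nra.
  apply Rabs_le. split; nra.
Qed.

Section Time.
Variables (n : nat) (s v : nat -> R).

Definition Eeq := sumR n (fun i => sumR n (fun l =>
   if Req_EM_T (v i) (v l) then K (s i - s l) else 0)).
Definition Ftot t := sumR n (fun i => sumR n (fun l => K (s i - s l + (v i - v l) * t))).
Definition Kp i l t := if Req_EM_T (v i) (v l) then 0 else K (s i - s l + (v i - v l) * t).
Definition Hp i l t := if Req_EM_T (v i) (v l) then 0 else AA (s i - s l + (v i - v l) * t) / (v i - v l).
Definition Cp i l := if Req_EM_T (v i) (v l) then 0 else / Rabs (v i - v l).

Lemma Ftot_split t : Ftot t = Eeq + sumR n (fun i => sumR n (fun l => Kp i l t)).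
Proof.
  unfold Ftot, Eeq, Kp. rewrite <- sumR_plus. apply sumR_ext. intros i _.
  rewrite <- sumR_plus. apply sumR_ext. intros l _.
  destruct (Req_EM_T (v i) (v l)) as [e|e].
  - rewrite e, Rminus_diag, Rmult_0_l, Rplus_0_r. ring.
  - ring.
Qed.

Lemma Hp_deriv i l t : derivable_pt_lim (Hp i l) t (Kp i l t).
Proof.
  unfold Hp, Kp. destruct (Req_EM_T (v i) (v l)) as [e|e].
  - apply derivable_pt_lim_const.
  - apply g_deriv. intros h; apply e; lra.
Qed.

Lemma Hp_bound i l t : Rabs (Hp i l t) <= Cp i l.
Proof.
  unfold Hp, Cp. destruct (Req_EM_T (v i) (v l)) as [e|e].
  - rewrite Rabs_R0; lra.
  - assert (0 < Rabs (v i - v l)) by (apply Rabs_pos_lt; intros h; apply e; lra).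
    unfold Rdiv. rewrite Rabs_mult, Rabs_inv.
    pose proof (AA_bound (s i - s l + (v i - v l) * t)).
    pose proof (Rabs_pos (AA (s i - s l + (v i - v l) * t))).
    assert (0 < / Rabs (v i - v l)) by (apply Rinv_0_lt_compat; auto). nra.
Qed.

Lemma time_avg eps : 0 < eps -> exists t, Ftot t >= Eeq - eps.
Proof.
  intros Heps. apply NNPP. intros Hn.
  assert (Hall : forall t, sumR n (fun i => sumR n (fun l => Kp i l t)) < - eps).
  { intros t. destruct (Rlt_dec (sumR n (fun i => sumR n (fun l => Kp i l t))) (- eps)); auto.
    exfalso. apply Hn. exists t. rewrite Ftot_split. lra. }
  set (H := fun t => sumR n (fun i => sumR n (fun l => Hp i l t))).
  set (C := sumR n (fun i => sumR n (fun l => Cp i l))).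
  assert (HB : forall t, Rabs (H t) <= C).
  { intros t. unfold H, C. apply sumR_abs_le. intros i _. apply sumR_abs_le. intros l _. apply Hp_bound. }
  assert (HC : 0 <= C) by (eapply Rle_trans; [apply Rabs_pos|apply (HB 0)]).
  set (T := (2 * C + 1) / eps).
  assert (HT : 0 < T) by (unfold T; apply Rdiv_lt_0_compat; lra).
  destruct (MVT_cor2 H (fun t => sumR n (fun i => sumR n (fun l => Kp i l t))) 0 T HT) as [xi [Hxi _]].
  { intros c _. unfold H. apply (deriv_sumR n (fun i t => sumR n (fun l => Hp i l t))
      (fun i t => sumR n (fun l => Kp i l t))). intros i _.
    apply (deriv_sumR n (fun l t => Hp i l t) (fun l t => Kp i l t)). intros l _. apply Hp_deriv. }
  pose proof (Hall xi). pose proof (HB T). pose proof (HB 0).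
  apply Rabs_le_inv2 in H1. apply Rabs_le_inv2 in H2.
  assert (eps * T = 2 * C + 1) by (unfold T; field; lra).
  rewrite Rminus_0_r in Hxi. nra.
Qed.
End Time.

Lemma B2_lip u v z : 0 <= u < 1 -> 0 <= v < 1 -> Rabs (v - u + IZR z) < 1/2 ->
  Rabs (B2 v - B2 u) <= 4 * Rabs (v - u + IZR z).
Proof.
  intros Hu Hv Hh.
  assert (Hz : (-2 < z < 2)%Z).
  { apply Rabs_def2 in Hh. split; apply lt_IZR; simpl; lra. }
  assert (Hc : z = 0%Z \/ z = 1%Z \/ z = (-1)%Z) by lia.
  destruct Hc as [Hc|[Hc|Hc]]; subst z; simpl IZR in *; apply Rabs_def2 in Hh;
  unfold B2; apply Rabs_le.
  - replace (v * v - v + 1 / 6 - (u * u - u + 1 / 6)) with ((v - u) * (v + u - 1)) by ring.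
    destruct (Rle_dec 0 (v - u)).
    + rewrite Rabs_right by lra. split; nra.
    + rewrite Rabs_left by lra. split; nra.
  - rewrite Rabs_right by lra. split; nra.
  - rewrite Rabs_left by lra. split; nra.
Qed.

Lemma cont_B2frac x : continuous (fun z => B2 (frac z)) x.
Proof.
  apply continuity_pt_filterlim.
  unfold continuity_pt, continue_in, limit1_in, limit_in. intros eps Heps.
  exists (Rmin (1/2) (eps / 4)). split; [apply Rmin_glb_lt; lra|].
  intros y [_ Hy]. simpl in *. unfold R_dist in *.
  pose proof (Rmin_l (1/2) (eps/4)). pose proof (Rmin_r (1/2) (eps/4)).
  destruct (frac_eq x) as [z0 Hz0]. destruct (frac_eq y) as [z1 Hz1].
  pose proof (frac_bounds x). pose proof (frac_bounds y).
  assert (Eh : y - x = frac y - frac x + IZR (z1 - z0)) by (rewrite minus_IZR; lra).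
  pose proof (B2_lip (frac x) (frac y) (z1 - z0) ltac:(auto) ltac:(auto) ltac:(rewrite <- Eh; lra)) as HK.
  rewrite <- Eh in HK. lra.
Qed.

Lemma is_RInt_val (f : R -> R) a b (l l' : R) : is_RInt f a b l -> l = l' -> is_RInt f a b l'.
Proof. intros H e. subst. exact H. Qed.

Lemma B2_int (g : nat) d : (1 <= g)%nat ->
  is_RInt (fun y => B2 (frac (d + INR g * y))) 0 1 0.
Proof.
  intros Hg. assert (Hg' : 0 < INR g) by (apply lt_0_INR; lia).
  pose proof (is_RInt_derive (V:=R_CompleteNormedModule) (fun y => 2 * (AA (d + INR g * y) / INR g))
     (fun y => B2 (frac (d + INR g * y))) 0 1) as P.
  eapply is_RInt_val; [apply P|].
  3:{ unfold minus, plus, opp; simpl. rewrite Rmult_1_r, Rmult_0_r, Rplus_0_r.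
    unfold AA. rewrite INR_IZR_INZ, frac_shift. ring. }
  - intros x _. apply is_derive_Reals.
    replace (B2 (frac (d + INR g * x))) with (2 * K (d + INR g * x)) by (unfold K; field).
    apply (derivable_pt_lim_scal (fun y => AA (d + INR g * y) / INR g)).
    apply g_deriv. lra.
  - intros x _. apply (continuous_comp (fun y => d + INR g * y) (fun z => B2 (frac z))).
    + apply (ex_derive_continuous (fun y => d + INR g * y)). auto_derive; auto.
    + apply cont_B2frac.
Qed.

Fixpoint sumL (L : list R) (F : R -> R) : R :=
  match L with nil => 0 | w :: L' => F w + sumL L' F end.

Lemma sumL_le L F G : (forall w, In w L -> F w <= G w) -> sumL L F <= sumL L G.
Proof. induction L; simpl; intros H; [lra|]. pose proof (H a (or_introl eq_refl)).
  pose proof (IHL (fun w Hw => H w (or_intror Hw))). lra. Qed.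

Lemma sumL_ext L F G : (forall w, In w L -> F w = G w) -> sumL L F = sumL L G.
Proof. induction L; simpl; intros H; auto. rewrite H by (left; auto). rewrite IHL; auto.
  Qed.

Lemma sumL_const L c : sumL L (fun _ => c) = INR (length L) * c.
Proof. induction L; simpl sumL; [simpl; ring|]. rewrite IHL. simpl length. rewrite S_INR. ring. Qed.

Lemma is_RInt_sumL L (f : R -> R -> R) (I : R -> R) u w :
  (forall x, In x L -> is_RInt (f x) u w (I x)) ->
  is_RInt (fun y => sumL L (fun x => f x y)) u w (sumL L I).
Proof.
  induction L; intros H; simpl.
  - eapply is_RInt_val; [apply (is_RInt_const (V:=R_NormedModule) u w 0)|].
    unfold scal; simpl; unfold mult; simpl. ring.
  - apply (is_RInt_plus (V:=R_NormedModule) (f a) (fun y => sumL L (fun x => f x y))).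
    + apply H; left; auto.
    + apply IHL. intros; apply H; right; auto.
Qed.

Lemma sumL_sumR L n (F : R -> nat -> R) :
  sumL L (fun w => sumR n (fun i => F w i)) = sumR n (fun i => sumL L (fun w => F w i)).
Proof.
  induction L; simpl.
  - induction n; simpl; [auto|rewrite <- IHn; ring].
  - rewrite IHL, <- sumR_plus. reflexivity.
Qed.

Lemma sumL_pick L a (X : R -> R) : NoDup L -> In a L ->
  sumL L (fun w => if Req_EM_T a w then X w else 0) = X a.
Proof.
  induction L; simpl; intros Hn Hi; [contradiction|].
  inversion Hn; subst. destruct Hi as [Hi|Hi].
  - subst. destruct (Req_EM_T a a) as [_|e]; [|contradiction].
    assert (sumL L (fun w => if Req_EM_T a w then X w else 0) = 0).
    { clear IHL H2 Hn. induction L; simpl; [auto|].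
      destruct (Req_EM_T a a0) as [e|e]; [subst; exfalso; apply H1; left; auto|].
      rewrite IHL; [ring|]. intros Hc; apply H1; right; auto. }
    lra.
  - destruct (Req_EM_T a0 a) as [e|e]; [subst; contradiction|]. rewrite IHL; auto.
    destruct (Req_EM_T a a0) as [e'|e']; [subst; contradiction|]. ring.
Qed.

Lemma dist_bound u z : B2 (frac (u + 1/2)) + 1/12 <= (u - IZR z) * (u - IZR z).
Proof.
  destruct (frac_eq (u + 1/2)) as [m Hm]. pose proof (frac_bounds (u + 1/2)) as Hb.
  rewrite Hm in *. unfold B2.
  replace ((u + 1 / 2 - IZR m) * (u + 1 / 2 - IZR m) - (u + 1 / 2 - IZR m) + 1 / 6 + 1 / 12)
    with ((u - IZR m) * (u - IZR m)) by field.
  destruct (Z.lt_total z m) as [H|[H|H]].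
  - assert (IZR z <= IZR m - 1) by (rewrite <- minus_IZR; apply IZR_le; lia). nra.
  - subst. lra.
  - assert (IZR m + 1 <= IZR z) by (rewrite <- plus_IZR; apply IZR_le; lia). nra.
Qed.

Lemma fw_form m (v s : nat -> R) w y : exists Z,
  sumR m (fun i => if Req_EM_T (v i) w then psi (y - s i) else 0) =
  sumR m (fun i => if Req_EM_T (v i) w then 1 else 0) * y
  - sumR m (fun i => if Req_EM_T (v i) w then s i + 1/2 else 0) - IZR Z.
Proof.
  induction m; simpl.
  - exists 0%Z. simpl. ring.
  - destruct IHm as [Z HZ]. rewrite HZ.
    destruct (Req_EM_T (v m) w).
    + destruct (frac_eq (y - s m)) as [z Hz]. exists (Z + z)%Z. unfold psi. rewrite Hz, plus_IZR. ring.
    + exists Z. ring.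
Qed.

Lemma sumR_ind_ge1 n (p : nat -> bool) i : (i < n)%nat -> p i = true ->
  1 <= sumR n (fun j => if p j then 1 else 0).
Proof.
  induction n; intros Hi Hp; [lia|]. simpl.
  assert (0 <= sumR n (fun j => if p j then 1 else 0)).
  { rewrite <- count_sumR. apply pos_INR. }
  destruct (Nat.eq_dec i n).
  - subst. rewrite Hp. lra.
  - pose proof (IHn ltac:(lia) Hp). destruct (p n); lra.
Qed.

Section Groups.
Variables (n : nat) (s v : nat -> R).

Definition LL := nodup Req_EM_T (map v (seq 0 n)).
Definition fw w y := sumR n (fun i => if Req_EM_T (v i) w then psi (y - s i) else 0).
Definition gw w := sumR n (fun i => if Req_EM_T (v i) w then 1 else 0).
Definition cw w := sumR n (fun i => if Req_EM_T (v i) w then s i + 1/2 else 0).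

Lemma in_LL i : (i < n)%nat -> In (v i) LL.
Proof. intros. unfold LL. apply nodup_In. apply in_map. apply in_seq. lia. Qed.

Lemma LL_in w : In w LL -> exists i, (i < n)%nat /\ v i = w.
Proof. unfold LL. rewrite nodup_In. intros H. apply in_map_iff in H. destruct H as [i [H1 H2]].
  apply in_seq in H2. exists i. split; [lia|auto]. Qed.

Lemma group_identity y :
  sumR n (fun i => sumR n (fun l => if Req_EM_T (v i) (v l) then psi (y - s i) * psi (y - s l) else 0))
  = sumL LL (fun w => fw w y * fw w y).
Proof.
  unfold fw.
  rewrite (sumL_ext LL _ (fun w => sumR n (fun i => sumR n (fun l =>
     (if Req_EM_T (v i) w then psi (y - s i) else 0) * (if Req_EM_T (v l) w then psi (y - s l) else 0)))))
    by (intros; apply sumR_sq).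
  rewrite sumL_sumR. apply sumR_ext. intros i Hi.
  rewrite sumL_sumR. apply sumR_ext. intros l Hl.
  rewrite (sumL_ext LL _ (fun w => if Req_EM_T (v i) w then
       psi (y - s i) * (if Req_EM_T (v l) w then psi (y - s l) else 0) else 0))
    by (intros; destruct (Req_EM_T (v i) w); ring).
  rewrite sumL_pick; [|apply NoDup_nodup|apply in_LL; auto].
  destruct (Req_EM_T (v i) (v l)) as [e|e]; destruct (Req_EM_T (v l) (v i)) as [e'|e'];
    try ring; exfalso; auto.
Qed.

Lemma group_bound y : sumL LL (fun w => B2 (frac (gw w * y - cw w + 1/2)) + 1/12) <= sumL LL (fun w => fw w y * fw w y).
Proof.
  apply sumL_le. intros w _. unfold fw, gw, cw. destruct (fw_form n v s w y) as [Z HZ].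
  rewrite HZ. apply dist_bound.
Qed.

Lemma gw_count w : gw w = INR (length (filter (fun i => if Req_EM_T (v i) w then true else false) (seq 0 n))).
Proof. unfold gw. rewrite count_sumR. apply sumR_ext. intros. destruct (Req_EM_T (v i) w); auto. Qed.

Lemma group_int w : In w LL ->
  is_RInt (fun y => B2 (frac (gw w * y - cw w + 1/2)) + 1/12) 0 1 (1/12).
Proof.
  intros Hw. destruct (LL_in w Hw) as [i0 [Hi0 Hv0]].
  set (g := length (filter (fun i => if Req_EM_T (v i) w then true else false) (seq 0 n))).
  assert (Hg : (1 <= g)%nat).
  { apply INR_le. unfold g. rewrite <- gw_count. unfold gw. change (INR 1) with 1.
    apply (sumR_ind_ge1 n (fun j => if Req_EM_T (v j) w then true else false) i0) in Hi0.
    - eapply Rle_trans; [apply Hi0|]. right. apply sumR_ext. intros. destruct (Req_EM_T (v i) w); auto.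
    - destruct (Req_EM_T (v i0) w); auto. }
  eapply is_RInt_val.
  - apply (is_RInt_plus (V:=R_NormedModule) (fun y => B2 (frac (gw w * y - cw w + 1/2))) (fun _ => 1/12)).
    + apply (is_RInt_ext (fun y => B2 (frac ((- cw w + 1/2) + INR g * y)))).
      { intros. rewrite gw_count. fold g. f_equal. f_equal. ring. }
      apply B2_int. auto.
    + apply (is_RInt_const (V:=R_NormedModule)).
  - unfold plus, scal; simpl. unfold mult; simpl. ring.
Qed.

Lemma Eeq_bound : INR (length LL) / 12 <= Eeq n s v.
Proof.
  apply (is_RInt_le (fun y => sumL LL (fun w => B2 (frac (gw w * y - cw w + 1/2)) + 1/12))
    (fun y => sumR n (fun i => sumR n (fun l => if Req_EM_T (v i) (v l) then psi (y - s i) * psi (y - s l) else 0))) 0 1).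
  - lra.
  - eapply is_RInt_val; [apply (is_RInt_sumL LL _ (fun _ => 1/12)); apply group_int|].
    rewrite sumL_const. field.
  - unfold Eeq. apply (is_RInt_sumR n (fun i y => sumR n (fun l => if Req_EM_T (v i) (v l) then psi (y - s i) * psi (y - s l) else 0))).
    intros i _. apply (is_RInt_sumR n (fun l y => if Req_EM_T (v i) (v l) then psi (y - s i) * psi (y - s l) else 0)).
    intros l _. destruct (Req_EM_T (v i) (v l)).
    + apply pair_integral.
    + eapply is_RInt_val; [apply (is_RInt_const (V:=R_NormedModule) 0 1 0)|].
      unfold scal; simpl; unfold mult; simpl. ring.
  - intros y _. rewrite group_identity. apply group_bound.
Qed.

End Groups.

Lemma midpoint_bound (h : R -> R) (B : R) :
  (forall y y', Rabs (h y - h y') <= B) ->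
  exists c, forall y, (h y - c) * (h y - c) <= B * B / 4.
Proof.
  intros HB.
  assert (Hb1 : bound (fun z => exists y, z = h y)).
  { exists (h 0 + B). intros z [y ->]. pose proof (HB y 0). apply Rabs_le_inv2 in H. lra. }
  assert (Hb2 : bound (fun z => exists y, z = - h y)).
  { exists (- h 0 + B). intros z [y ->]. pose proof (HB 0 y). apply Rabs_le_inv2 in H. lra. }
  destruct (completeness _ Hb1 (ex_intro _ (h 0) (ex_intro _ 0 eq_refl))) as [M [HM1 HM2]].
  destruct (completeness _ Hb2 (ex_intro _ (- h 0) (ex_intro _ 0 eq_refl))) as [M' [HM1' HM2']].
  assert (Hup : forall y, h y <= M) by (intros y; apply HM1; exists y; auto).
  assert (Hlo : forall y, - h y <= M') by (intros y; apply HM1'; exists y; auto).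
  assert (HMM : M <= B - M').
  { apply HM2. intros z [y ->].
    assert (M' <= B - h y).
    { apply HM2'. intros z [y' ->]. pose proof (HB y y'). apply Rabs_le_inv2 in H. lra. }
    lra. }
  exists ((M - M') / 2). intros y. pose proof (Hup y). pose proof (Hlo y).
  assert (Hd : Rabs (h y - (M - M') / 2) <= B / 2).
  { apply Rabs_le. lra. }
  pose proof (Rabs_pos (h y - (M - M') / 2)).
  replace ((h y - (M - M') / 2) * (h y - (M - M') / 2)) with
    (Rabs (h y - (M - M') / 2) * Rabs (h y - (M - M') / 2)) by (rewrite <- Rabs_mult; apply Rabs_right; apply Rle_ge, Rle_0_sqr).
  nra.
Qed.

Theorem theorem2p1 (n : nat) (s v : nat -> R) :
  (1 <= n)%nat ->
  (forall i, (i < n)%nat -> 0 <= s i /\ s i < 1) ->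
  exists t : R,
    bias n (fun i => s i + v i * t) >= sqrt (INR (num_distinct n v) / 12).
Proof.
  intros Hn _.
  assert (Hk : 1 <= INR (num_distinct n v)).
  { unfold num_distinct. change (nodup Req_EM_T (map v (seq 0 n))) with (LL n v).
    pose proof (in_LL n v 0 ltac:(lia)) as Hin.
    destruct (LL n v); [contradiction|]. simpl length. rewrite S_INR. pose proof (pos_INR (length l)). lra. }
  set (k := INR (num_distinct n v)) in *.
  destruct (time_avg n s v (k / 16) ltac:(lra)) as [t Ht].
  exists t. set (r := fun i => s i + v i * t).
  set (B := bias n r).
  pose proof (bias_nonneg n r) as HB0. fold B in HB0.
  destruct (midpoint_bound (hh n r) B (h_bias n r)) as [c Hc].
  assert (Hint : sumR n (fun i => sumR n (fun l => K (r i - r l))) + c * c <= B * B / 4).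
  { apply (is_RInt_le (fun y => (hh n r y - c) * (hh n r y - c)) (fun _ => B * B / 4) 0 1).
    - lra.
    - apply h_integral.
    - eapply is_RInt_val; [apply (is_RInt_const (V:=R_NormedModule))|].
      unfold scal; simpl; unfold mult; simpl. ring.
    - intros; apply Hc. }
  assert (HF : Ftot n s v t = sumR n (fun i => sumR n (fun l => K (r i - r l)))).
  { unfold Ftot. apply sumR_ext. intros i _. apply sumR_ext. intros l _. unfold r. f_equal. ring. }
  pose proof (Eeq_bound n s v) as HE.
  assert (HLL : INR (length (LL n v)) = k) by reflexivity.
  rewrite HLL in HE.
  pose proof (Rle_0_sqr c). unfold Rsqr in H.
  assert (HBB : k / 12 <= B * B) by lra.
  apply Rle_ge. rewrite <- (sqrt_square B) by auto.
  apply sqrt_le_1_alt. exact HBB.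
Qed.
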